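(* Under the standing assumptions: (i) $v(P)\ge v(D^F)$ if and only if $\Omega\cap B\subseteq\operatorname{epi}(f-g+\delta_A)^c\cap B$. (ii) $v(P)\ge v(\bar D^F)$ if and only if $K\cap B\subseteq\operatorname{epi}(f-g+\delta_A)^c\cap B$.
   Context: Let $X$ be a nontrivial separated locally convex space with topological dual $X^*$, endowed with the topology $\sigma(X,X^* )$; $\langle x,x^*\rangle$ is the value of $x^*\in X^*$ at $x\in X$. Put $W:=X^*\times X^*\times\mathbb{R}$, $\mathbb{R}_{++}:=]0,+\infty[$ and $Z:=X^*\times X^*\times\mathbb{R}_{++}$. For $y^*\in X^*$, $\alpha\in\mathbb{R}$, let $H^-_{y^*,\alpha}:=\{x\in X:\langle x,y^*\rangle<\alpha\}$. The coupling function $c:X\times W\to\overline{\mathbb{R}}$ is $c(x,(x^*,y^*,\alpha)):=\langle x,x^*\rangle$ if $\langle x,y^*\rangle<\alpha$ and $:=+\infty$ otherwise. For $h:X\to\overline{\mathbb{R}}$ its $c$-conjugate is $h^c:W\to\overline{\mathbb{R}}$, $h^c(w):=\sup_{x\in X}\{c(x,w)-h(x)\}$, with the convention $(+\infty)+(-\infty)=(-\infty)+(+\infty)=(+\infty)-(+\infty)=(-\infty)-(-\infty)=-\infty$ (so for proper $h$, $h^c(x^*,y^*,\alpha)=h^*(x^* )$ if $\operatorname{dom}h\subseteq H^-_{y^*,\alpha}$ and $+\infty$ otherwise). Epigraphs of functions on $W$ are subsets of $W\times\mathbb{R}$. $\delta_A$ is the indicator function of $A$. For $E\subseteq W\times\mathbb{R}$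 and $e\in W\times\mathbb{R}$, $E-e:=\{z-e:z\in E\}$. Standing assumptions: $f,g:X\to\overline{\mathbb{R}}$ proper convex with $\operatorname{dom}f\subseteq\operatorname{dom}g$, $A\subseteq X$ nonempty, convention $(+\infty)-(+\infty)=+\infty$ in $f-g$; $v(P)=\inf_{x\in X}\{f(x)-g(x)+\delta_A(x)\}$. With $\varphi(u^*,v^*,\gamma;x^*,y^*,\alpha):=g^c(u^*,v^*,\gamma)-f^c(u^*-x^*,-y^*,\alpha)-\delta_A^c(x^*,y^*,\alpha)$: $v(D^F):=\sup_{(x^*,y^*,\alpha)\in Z}\inf_{(u^*,v^*,\gamma)\in\operatorname{dom}g^c}\varphi$ and $v(\bar D^F):=\inf_{(u^*,v^*,\gamma)\in\operatorname{dom}g^c}\sup_{(x^*,y^*,\alpha)\in Z}\varphi$. Sets: $B:=\{0\}\times\{0\}\times\mathbb{R}_{++}\times\mathbb{R}\subseteq W\times\mathbb{R}$; $\Omega:=\bigcup_{(x^*,y^*,\alpha)\in\operatorname{dom}\delta_A^c}\ \bigcap_{(u^*,v^*,\gamma)\in\operatorname{dom}g^c}\Big[\operatorname{epi}\big(f-c(\cdot,(-x^*,-y^*,\alpha))\big)^c-\big(u^*,0,0,g^c(u^*,v^*,\gamma)-\delta_A^c(x^*,y^*,\alpha)\big)\Big]$, $K:=\bigcap_{(u^*,v^*,\gamma)\in\operatorname{dom}g^c}\ \bigcup_{(x^*,y^*,\alpha)\in\operatorname{dom}\delta_A^c}\Big[\operatorname{epi}\big(f-c(\cdot,(-x^*,-y^*,\alpha))\big)^c-\big(u^*,0,0,g^c(u^*,v^*,\gamma)-\delta_A^c(x^*,y^*,\alpha)\big)\Big]$.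 *)

(* Defs.v *)
From HB Require Import structures.
From mathcomp Require Import all_boot all_order all_algebra.
From mathcomp Require Import all_classical all_reals all_analysis.

Set Implicit Arguments.
Unset Strict Implicit.
Unset Printing Implicit Defensive.

Import Order.TTheory GRing.Theory Num.Theory.
Local Open Scope classical_set_scope.
Local Open Scope ring_scope.

Section Defs.
Context {R : realType} {X : tvsType R}.

Definition dual : set (X -> R) :=
  [set l | (forall (a : R) (x y : X), l (a *: x + y) = a * l x + l y)
           /\ continuous (l : X -> R^o)].

(* W = X^* x X^* x R, represented inside (X -> R) * (X -> R) * R;
   Wd is the set of genuine elements of W. *)
Definition W := ((X -> R) * (X -> R) * R)%type.
Definition Wd : set W := [set w | dual w.1.1 /\ dual w.1.2].
Definition Zset : set W := [set w | Wd w /\ 0 < w.2].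

Local Open Scope ereal_scope.

Definition coupling (x : X) (w : W) : \bar R :=
  if (w.1.2 x < w.2)%R then (w.1.1 x)%:E else +oo.

(* c-conjugate; uses mathcomp's [-], for which (+oo) + (-oo) = -oo,
   exactly the convention of the paper for conjugates *)
Definition cconj (h : X -> \bar R) (w : W) : \bar R :=
  ereal_sup [set coupling x w - h x | x in [set: X]].

(* subtraction with the convention (+oo) - (+oo) = +oo (dual addition) *)
Definition subtop (a b : \bar R) : \bar R := dual_adde a (- b).

Definition indic (A : set X) (x : X) : \bar R :=
  if x \in A then 0 else +oo.

Definition proper_fun (h : X -> \bar R) :=
  (exists x, h x < +oo) /\ (forall x, -oo < h x).

Definition convex_fun (h : X -> \bar R) :=
  forall (x y : X) (t : R), (0 < t < 1)%R ->
    h ((t *: x + (1 - t) *: y)%R) <= t%:E * h x + (1 - t)%:E * h y.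

Definition epiW (F : W -> \bar R) : set (W * R) :=
  [set p | Wd p.1 /\ F p.1 <= p.2%:E].

Definition shiftW (E : set (W * R)) (e : W * R) : set (W * R) :=
  [set z | exists2 p, E p &
     z = (((fun x => p.1.1.1 x - e.1.1.1 x)%R, (fun x => p.1.1.2 x - e.1.1.2 x)%R,
           (p.1.2 - e.1.2)%R), (p.2 - e.2)%R)].

Definition Bset : set (W * R) :=
  [set p | p.1.1.1 = (fun _ => 0%R) /\ p.1.1.2 = (fun _ => 0%R) /\ (0 < p.1.2)%R].

Definition domW (F : W -> \bar R) : set W := [set w | Wd w /\ F w < +oo].

Section Problem.
Variables (f g : X -> \bar R) (A : set X).

Definition hobj (x : X) : \bar R := subtop (f x) (g x) + indic A x.

Definition vP : \bar R := ereal_inf [set hobj x | x in [set: X]].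

Definition negpair (w : W) : W :=
  (((fun x => - w.1.1 x)%R, (fun x => - w.1.2 x)%R), w.2).

Definition phiF (u w : W) : \bar R :=
  cconj g u
  - cconj f ((fun x => u.1.1 x - w.1.1 x)%R, (fun x => - w.1.2 x)%R, w.2)
  - cconj (indic A) w.

Definition vDF : \bar R :=
  ereal_sup [set ereal_inf [set phiF u w | u in domW (cconj g)] | w in Zset].

Definition vbarDF : \bar R :=
  ereal_inf [set ereal_sup [set phiF u w | w in Zset] | u in domW (cconj g)].

(* the shifted epigraph appearing in Omega and K; the real number
   g^c(u) - delta_A^c(w) is finite on dom g^c x dom delta_A^c *)
Definition shiftedEpi (w u : W) : set (W * R) :=
  shiftW (epiW (cconj (fun x => subtop (f x) (coupling x (negpair w)))))
         ((u.1.1, (fun _ => 0%R), 0%R), fine (cconj g u - cconj (indic A) w)).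

Definition Omega : set (W * R) :=
  \bigcup_(w in domW (cconj (indic A))) \bigcap_(u in domW (cconj g)) shiftedEpi w u.

Definition Kset : set (W * R) :=
  \bigcap_(u in domW (cconj g)) \bigcup_(w in domW (cconj (indic A))) shiftedEpi w u.

End Problem.
End Defs.

(* Main.v *)
Require Import Defs.
From HB Require Import structures.
From mathcomp Require Import all_boot all_order all_algebra.
From mathcomp Require Import all_classical all_reals all_analysis.
From mathcomp Require Import ring lra.
Import Order.TTheory GRing.Theory Num.Theory.
Local Open Scope classical_set_scope.
Local Open Scope ring_scope.

Section Aux.
Context {R : realType} {X : tvsType R}.
Local Open Scope ereal_scope.
Implicit Types (w u q : @W R X).

Lemma dual0 : dual (fun _ : X => 0%R).
Proof. split; first by move=> a x y; rewrite mulr0 addr0. exact: cst_continuous. Qed.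

Lemma coupling_mono (x : X) a b (al al' : R) : (al <= al')%R ->
  coupling x (a, b, al') <= coupling x (a, b, al).
Proof.
move=> h; rewrite /coupling /=; case: ifP => h1; case: ifP => h2 //; try exact: leey.
by rewrite (lt_le_trans h2 h) in h1.
Qed.

Lemma cconj_mono (h : X -> \bar R) a b (al al' : R) : (al <= al')%R ->
  cconj h (a, b, al') <= cconj h (a, b, al).
Proof.
move=> hl; apply: ge_ereal_sup => _ [x _ <-].
have H1 := leeB (coupling_mono x a b _ _ hl) (lexx (h x)).
apply: (le_trans H1).
by apply: ereal_sup_ubound; exists x.
Qed.

Lemma fin_conj (h : X -> \bar R) w : (exists x0 r0, h x0 = r0%:E) ->
  domW (cconj h) w -> exists c, cconj h w = c%:E.
Proof.
move=> [x0 [r0 e]] [_ hlt].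
have : -oo < cconj h w.
  apply: (lt_le_trans (_ : -oo < coupling x0 w - h x0)); last first.
    by apply: ereal_sup_ubound; exists x0.
  by rewrite e /coupling; case: ifP => _ /=; rewrite ?ltNyr // ltNye.
by move: hlt; case: (cconj h w) => [c| |] //; exists c.
Qed.

Lemma sub_infty (x y : \bar R) : x - y - +oo = -oo.
Proof. by rewrite addeNy. Qed.

End Aux.

Section Main.
Context {R : realType} {X : tvsType R}.
Variables (f g : X -> \bar R) (A : set X).
Local Open Scope ereal_scope.
Implicit Types (w u q : @W R X).

Definition kk w (x : X) : \bar R := subtop (f x) (coupling x (negpair w)).
Definition Fw u w : \bar R :=
  cconj f ((fun x => u.1.1 x - w.1.1 x)%R, (fun x => - w.1.2 x)%R, w.2).

Lemma cconj_k (pf : forall x, -oo < f x) w u q :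
  (forall x, q.1.1 x = u.1.1 x) -> (forall x, q.1.2 x = 0%R) -> (0 < q.2)%R ->
  cconj (kk w) q = Fw u w.
Proof.
move=> h1 h2 h3; rewrite /cconj /Fw; congr ereal_sup; congr image.
apply: funext => x; rewrite /kk /coupling /negpair /subtop /= h1 h2 h3.
have := pf x; case: (f x) => [a| |] // _; case: ifP => _ /=.
- by congr EFin; ring.
- by [].
- by [].
- by [].
Qed.

Lemma L_shift (pf : forall x, -oo < f x) w u (Wu : Wd u) (G D : R)
  (eG : cconj g u = G%:E) (eD : cconj (Defs.indic A) w = D%:E) (al r : R) :
  (0 < al)%R ->
  shiftedEpi f g A w u (((fun _ => 0%R), (fun _ => 0%R), al), r) <->
  - r%:E <= phiF f g A u w.
Proof.
move=> hal; rewrite /shiftedEpi /phiF eG eD /=.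
have -> : cconj f ((fun x => u.1.1 x - w.1.1 x)%R, (fun x => - w.1.2 x)%R, w.2)
  = Fw u w by [].
split.
- case=> [[[[p1 p2] pa] pr]] [Wp Ep] [E1 E2 E3 E4].
  rewrite (@cconj_k pf w u) /= in Ep; last 3 first.
  + move=> x; have := congr1 (fun h => h x) E1 => /= /eqP.
    by rewrite eq_sym subr_eq0 => /eqP.
  + by move=> x; have := congr1 (fun h => h x) E2 => /=; rewrite subr0.
  + by move: hal; rewrite E3 subr0.
  move: Ep; rewrite E4; case: (Fw u w) => [a| |] //= h.
  + rewrite lee_fin in h; rewrite lee_fin; lra.
  + by rewrite addey // addye // leey.
- move=> h; exists (((u.1.1, (fun _ => 0%R), al)), (r + (G - D))%R).
  + split; first by split; [case: Wu|exact: dual0].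
    rewrite (@cconj_k pf w u) //.
    move: h; case: (Fw u w) => [a| |] //= h.
    * rewrite lee_fin in h; rewrite lee_fin; lra.
    * exact: leNye.
  + congr pair; last by rewrite /=; ring.
    congr pair; last by rewrite subr0.
    by congr pair; apply: funext => x; rewrite ?subrr ?subr0.
Qed.

Lemma L_epi (al r : R) : (0 < al)%R ->
  epiW (cconj (hobj f g A)) (((fun _ => 0%R), (fun _ => 0%R), al), r) <->
  - r%:E <= vP f g A.
Proof.
move=> hal; rewrite /epiW /=; split.
- case=> _ h; apply/ereal_infP => _ [x _ <-]; rewrite EFinN leeNl.
  apply: (le_trans _ h); apply: ereal_sup_ubound; exists x => //.
  by rewrite /coupling /= hal sub0e.
- move=> h; split; first by split; exact: dual0.
  apply: ge_ereal_sup => _ [x _ <-]; rewrite /coupling /= hal sub0e leeNl.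
  by apply: le_trans h _; apply: ereal_inf_lbound; exists x.
Qed.

Lemma phi_mono u a b (al : R) :
  phiF f g A u (a, b, al) <= phiF f g A u (a, b, Num.max al 1%R).
Proof.
rewrite /phiF; apply: leeB; first apply: leeB.
- exact: lexx.
- by apply: cconj_mono; rewrite le_max lexx.
- by apply: cconj_mono; rewrite le_max lexx.
Qed.

Lemma w0_dom : domW (cconj (Defs.indic A)) ((fun _ => 0%R), (fun _ => 0%R), 1%R).
Proof.
split; first by split; exact: dual0.
apply: (@le_lt_trans _ _ 0); last exact: ltry.
apply: ge_ereal_sup => _ [x _ <-]; rewrite /coupling /= ltr01 /Defs.indic.
by case: ifP => _ /=; rewrite ?subee // leNye.
Qed.

End Main.

Local Open Scope ereal_scope.
Lemma le_by_reals {R : realType} (x y : \bar R) :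
  (forall s : R, s%:E < x -> s%:E <= y) -> x <= y.
Proof.
case: x => [a| |] h.
- apply/lee_subgt0Pr => e e0; apply: h; rewrite lte_fin; lra.
- case: y h => [b| |] h //.
  + have := h (b + 1)%R (ltry _); rewrite lee_fin => H; exfalso.
    by move: H; apply/negP; rewrite -ltNge; lra.
  + by have := h 0%R (ltry _).
- exact: leNye.
Qed.

Local Close Scope ereal_scope.
Local Open Scope ring_scope.
Theorem proposition4p2 (R : realType) (X : tvsType R)
    (f g : X -> \bar R) (A : set X) :
  hausdorff_space X ->
  (exists x : X, x != 0) ->
  proper_fun f -> convex_fun f ->
  proper_fun g -> convex_fun g ->
  (forall x, (f x < +oo)%E -> (g x < +oo)%E) ->
  A !=set0 ->
  ((vDF f g A <= vP f g A)%E <->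
     (Omega f g A `&` Bset `<=` epiW (cconj (hobj f g A)) `&` Bset))
  /\
  ((vbarDF f g A <= vP f g A)%E <->
     (Kset f g A `&` Bset `<=` epiW (cconj (hobj f g A)) `&` Bset)).
Proof.
move=> _ _ [pf1 pf2] _ [pg1 pg2] _ _ [a0 Aa0].
Local Open Scope ereal_scope.
set domD := domW (cconj (Defs.indic A)).
set domG := domW (cconj g).
have finG : forall u, domG u -> exists G, cconj g u = G%:E.
  move=> u hu; apply: fin_conj hu; case: pg1 => x0 hx0; exists x0.
  by move: (pg2 x0) hx0; case: (g x0) => [r0| |] //; exists r0.
have finD : forall w, domD w -> exists D, cconj (Defs.indic A) w = D%:E.
  move=> w hw; apply: fin_conj hw; exists a0, 0%R.
  by rewrite /Defs.indic mem_set.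
have minf : forall u w, Wd w -> ~ domD w -> phiF f g A u w = -oo.
  move=> u w Ww nd; have E : cconj (Defs.indic A) w = +oo.
    apply/eqP; rewrite -leye_eq leNgt; apply/negP => lt; exact: nd.
  by rewrite /phiF E; exact: addeNy.
have Hset1 : (Omega f g A `&` Bset `<=` epiW (cconj (hobj f g A)) `&` Bset) <->
  (forall s : R, (exists2 w, domD w &
     forall u, domG u -> s%:E <= phiF f g A u w) -> s%:E <= vP f g A).
  split.
  - move=> H s [w hw hall].
    have [] := H (((fun _ => 0%R), (fun _ => 0%R), 1%R), (- s)%R).
      split; last by split => //=; exact: ltr01.
      exists w => // u hu.
      case: (finG u hu) => G eG; case: (finD w hw) => D eD.
      apply/(@L_shift _ _ f g A pf2 w u hu.1 G D eG eD 1%R (- s)%R ltr01).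
      by rewrite EFinN oppeK; exact: hall.
    by move=> /(@L_epi _ _ f g A 1%R (- s)%R ltr01); rewrite EFinN oppeK.
  - move=> H [[[a b] al] r] [[w hw hall] [/= ea [eb hal]]]; subst.
    split; last by split.
    apply/(@L_epi _ _ f g A al r hal); apply: H; exists w => // u hu.
    case: (finG u hu) => G eG; case: (finD w hw) => D eD.
    exact/(@L_shift _ _ f g A pf2 w u hu.1 G D eG eD al r hal)/hall.
have Hset2 : (Kset f g A `&` Bset `<=` epiW (cconj (hobj f g A)) `&` Bset) <->
  (forall s : R, (forall u, domG u -> exists2 w, domD w &
     s%:E <= phiF f g A u w) -> s%:E <= vP f g A).
  split.
  - move=> H s hall.
    have [] := H (((fun _ => 0%R), (fun _ => 0%R), 1%R), (- s)%R).
      split; last by split => //=; exact: ltr01.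
      move=> u hu; case: (hall u hu) => w hw hs; exists w => //.
      case: (finG u hu) => G eG; case: (finD w hw) => D eD.
      apply/(@L_shift _ _ f g A pf2 w u hu.1 G D eG eD 1%R (- s)%R ltr01).
      by rewrite EFinN oppeK.
    by move=> /(@L_epi _ _ f g A 1%R (- s)%R ltr01); rewrite EFinN oppeK.
  - move=> H [[[a b] al] r] [hall [/= ea [eb hal]]]; subst.
    split; last by split.
    apply/(@L_epi _ _ f g A al r hal); apply: H => u hu.
    case: (hall u hu) => w hw hs; exists w => //.
    case: (finG u hu) => G eG; case: (finD w hw) => D eD.
    exact/(@L_shift _ _ f g A pf2 w u hu.1 G D eG eD al r hal).
have Zmax : forall a b (al : R), Wd (a, b, al) -> Zset (a, b, Num.max al 1%R).
  by move=> a b al Ww; split => //=; rewrite lt_max ltr01 orbT.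
split.
- apply: (iff_trans _ (iff_sym Hset1)); split.
  + move=> hv s [w hw hall]; apply: (le_trans _ hv).
    case: w hw hall => [[a b] al] hw hall.
    apply: le_ereal_sup_tmp.
    exists (ereal_inf [set phiF f g A u (a, b, Num.max al 1%R) | u in domG]).
      by exists (a, b, Num.max al 1%R) => //; apply: Zmax; case: hw.
    apply: le_ereal_inf_tmp => _ [u hu <-].
    exact: le_trans (hall u hu) (phi_mono _ _ _ _ _ _ _).
  + move=> H; apply: le_by_reals => s /ereal_sup_gt [_ [w [Ww hw2] <-] hs].
    case: (pselect (domD w)) => hD.
    * apply: H; exists w => // u hu; apply/ltW/(lt_le_trans hs).
      by apply: ereal_inf_lbound; exists u.
    * apply: H; exists ((fun _ => 0%R), (fun _ => 0%R), 1%R).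
        exact: w0_dom.
      move=> u hu; exfalso.
      have : s%:E < phiF f g A u w.
        by apply: (lt_le_trans hs); apply: ereal_inf_lbound; exists u.
      by rewrite minf.
- apply: (iff_trans _ (iff_sym Hset2)); split.
  + move=> hv s hall; apply: (le_trans _ hv).
    apply: le_ereal_inf_tmp => _ [u hu <-].
    case: (hall u hu) => [[[a b] al] hw hs].
    apply: le_ereal_sup_tmp; exists (phiF f g A u (a, b, Num.max al 1%R)).
      by exists (a, b, Num.max al 1%R) => //; apply: Zmax; case: hw.
    exact: le_trans hs (phi_mono _ _ _ _ _ _ _).
  + move=> H; apply: le_by_reals => s hs; apply: H => u hu.
    have : s%:E < ereal_sup [set phiF f g A u w | w in Zset].
      by apply: (lt_le_trans hs); apply: ereal_inf_lbound; exists u.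
    move=> /ereal_sup_gt [_ [w [Ww _] <-] hs'].
    case: (pselect (domD w)) => hD.
    * by exists w => //; exact: ltW.
    * by exfalso; rewrite minf in hs'.
Qed.
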